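(* Let $\mathcal{U}\subseteq\mathbb{R}^K$ be convex and closed. Then the no-arbitrage subset $\mathcal{U}^{na}$ of $\mathcal{U}$ exists and equals $\mathcal{V}(\mathcal{U})\cap\mathcal{U}$, where \[\mathcal{V}(\mathcal{U})=\Big\{r\in\mathbb{R}^K:\ 0\in\mathcal{U},\ \Big(\textstyle\sum_{j=1}^ke_jr_j\in\mathcal{U}\Big)\vee\big(r_{1:k}\notin\mathcal{U}_{1:k}\big),\ \forall k=1,\dots,K-1\Big\},\] with $e_j\in\mathbb{R}^K$ the $j$-th column of the identity matrix, and $\mathcal{V}(\mathcal{U})=\emptyset$ if $0\notin\mathcal{U}$.
   Context: For $\mathcal{U}\subseteq\mathbb{R}^K$, history $\hat r_{1:k-1}\in\mathbb{R}^{k-1}$ and $1\le k\le k'\le K$, the projection is $\mathcal{U}_{k:k'}(\hat r_{1:k-1})=\{r\in\mathbb{R}^{k'-k+1}:\exists\bar r\in\mathbb{R}^{K-k'},\ [\hat r_{1:k-1};r;\bar r]\in\mathcal{U}\}$ (for $k'=K$: $[\hat r_{1:k-1};r]\in\mathcal{U}$); $\mathcal{U}_{1:k}$ denotes the projection onto the first $k$ coordinates. The worst-case risk measure with uncertainty set $\mathcal{U}$ is $\rho=\rho_0\circ\cdots\circ\rho_{K-1}$, with $\rho_k(X,r)=\sup_{r'\in\mathcal{U}:r'_{1:k}=r_{1:k}}X(r')$ if some $r'\in\mathcal{U}$ has $r'_{1:k}=r_{1:k}$, otherwise $\rho_k(X,r)=X([r_{1:k};0_{k+1:K}])$; $\rho_{k,K}=\rho_k\circ\cdots\circ\rho_{K-1}$.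 Investments $\zeta_\ell$ are functions of $r_{1:\ell}$. The set of returns with bounded conditional market risk is $\mathcal{A}(\mathcal{U})=\{r\in\mathbb{R}^K:\forall k\in\{0,\dots,K-1\},\ \inf_{\zeta_k,\dots,\zeta_{K-1}}\rho_{k,K}(-\sum_{\ell=k}^{K-1}\zeta_\ell r_{\ell+1},r)\in(-\infty,0]\}$ (here $\rho_{k,K}$ uses $\mathcal{U}$). The no-arbitrage subset $\mathcal{U}^{na}$ of $\mathcal{U}$ is the largest $\mathcal{U}'\subseteq\mathcal{U}$ with $\mathcal{U}'\subseteq\mathcal{A}(\mathcal{U}')$, i.e. $\mathcal{U}^{na}\subseteq\mathcal{A}(\mathcal{U}^{na})$ and every $\mathcal{U}'\subseteq\mathcal{U}$ with $\mathcal{U}'\subseteq\mathcal{A}(\mathcal{U}')$ satisfies $\mathcal{U}'\subseteq\mathcal{U}^{na}$. *)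

(* Defs.v *)
(* R^K is represented as 'rV[R]_K; the
   paper's coordinate j (1-based) is the ordinal j-1 (0-based). *)
From mathcomp Require Import all_boot all_order all_algebra.
From mathcomp Require Import all_classical all_reals all_analysis.
Set Implicit Arguments. Unset Strict Implicit. Unset Printing Implicit Defensive.
Import Order.TTheory GRing.Theory Num.Theory.
Local Open Scope classical_set_scope.
Local Open Scope ring_scope.

Section Defs.
Variables (R : realType) (K : nat).
Implicit Types (U : set 'rV[R]_K) (r : 'rV[R]_K).

Definition convexU U := forall x y (t : R), U x -> U y -> 0 <= t -> t <= 1 ->
  U (t *: x + (1 - t) *: y).

Definition agree (k : nat) (r' r : 'rV[R]_K) :=
  forall i : 'I_K, (i < k)%N -> r' 0 i = r 0 i.

(* r_{1:k} \in U_{1:k}  (projection of U onto the first k coordinates) *)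
Definition in_proj U (k : nat) r := exists u, U u /\ agree k u r.

Definition trunc (k : nat) r : 'rV[R]_K :=
  \row_(i < K) (if (i < k)%N then r 0 i else 0).

Definition rho U (k : nat) (X : 'rV[R]_K -> \bar R) (r : 'rV[R]_K) : \bar R :=
  if pselect (in_proj U k r)
  then ereal_sup [set X r' | r' in [set r' | U r' /\ agree k r' r]]
  else X (trunc k r).

Definition rho_from U (k : nat) (X : 'rV[R]_K -> \bar R) : 'rV[R]_K -> \bar R :=
  foldr (fun l Y => rho U l Y) X (iota k (K - k)).

Definition adapted (k : nat) (zeta : nat -> 'rV[R]_K -> R) :=
  forall l : nat, (k <= l)%N -> (l < K)%N ->
    forall r r', agree l r r' -> zeta l r = zeta l r'.

(* - \sum_{l=k}^{K-1} zeta_l r_{l+1}  (r_{l+1} is the 0-based coordinate l) *)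
Definition loss (k : nat) (zeta : nat -> 'rV[R]_K -> R) (r' : 'rV[R]_K) : \bar R :=
  (- \sum_(l < K | (k <= l)%N) zeta l r' * r' 0 l)%:E.

Definition A_set U : set 'rV[R]_K :=
  [set r | forall k : nat, (k < K)%N ->
     let v := ereal_inf [set rho_from U k (loss k zeta) r
                        | zeta in [set z | adapted k z]] in
     (-oo < v)%E /\ (v <= 0)%E].

Definition is_na_subset U (W : set 'rV[R]_K) :=
  [/\ W `<=` U, W `<=` A_set W &
      forall W', W' `<=` U -> W' `<=` A_set W' -> W' `<=` W].

Definition V_set U : set 'rV[R]_K :=
  [set r : 'rV[R]_K | U 0 /\ forall k : nat, (1 <= k)%N -> (k <= K - 1)%N ->
     U (\sum_(j < K | (j < k)%N) r 0 j *: (delta_mx 0 j : 'rV[R]_K)) \/ ~ in_proj U k r].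

End Defs.

(* Main.v *)
Require Import Defs.
From mathcomp Require Import all_boot all_order all_algebra.
From mathcomp Require Import all_classical all_reals all_analysis.
From mathcomp Require Import zify ring lra.
Import numFieldNormedType.Exports.
Import Order.TTheory GRing.Theory Num.Theory.
Local Open Scope classical_set_scope.
Local Open Scope ring_scope.

Section Helpers.
Variables (R : realType) (K : nat).
Implicit Types (W : set 'rV[R]_K) (r s p : 'rV[R]_K).

Lemma rho_from_K W X : rho_from W K X = X.
Proof. by rewrite /rho_from subnn. Qed.

Lemma rho_from_S W X l : (l < K)%N ->
  rho_from W l X = rho W l (rho_from W l.+1 X).
Proof.
move=> hl; rewrite /rho_from.
have -> : (K - l = (K - l.+1).+1)%N by rewrite subnSK.
by [].
Qed.

Lemma agree_refl l r : agree l r r.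
Proof. by []. Qed.

Lemma agree_trunc l r : agree l (trunc l r) r.
Proof. by move=> i hi; rewrite mxE hi. Qed.

Lemma trunc_K r : trunc K r = r.
Proof. by apply/rowP => i; rewrite mxE ltn_ord; congr (r _ _); apply/val_inj. Qed.

Lemma trunc0 r : trunc 0 r = 0.
Proof. by apply/rowP => i; rewrite !mxE. Qed.

Lemma trunc_trunc k l r : trunc k (trunc l r) = trunc (minn k l) r.
Proof.
apply/rowP => i; rewrite !mxE leq_min.
by case: (i < k)%N; case: (i < l)%N.
Qed.

Lemma sum_trunc k r :
  \sum_(j < K | (j < k)%N) r 0 j *: (delta_mx 0 j : 'rV[R]_K) = trunc k r.
Proof.
apply/rowP => i; rewrite summxE !mxE.
under eq_bigr => j _ do rewrite !mxE eqxx /=.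
case: (ltnP i k) => hik.
  rewrite (bigD1 i) //= eqxx mulr1 big1 ?addr0 // => j /andP[_ hj].
  by rewrite eq_sym (negbTE hj) mulr0.
rewrite big1 // => j hj; case: eqP => [ij|]; last by rewrite mulr0.
by move: hj; rewrite -ij ltnNge hik.
Qed.

Lemma rho_from_ub W X l p (M : \bar R) : (l <= K)%N -> W p ->
  (forall s, W s -> agree l s p -> (X s <= M)%E) -> (rho_from W l X p <= M)%E.
Proof.
move=> hl; move: {2}(K - l)%N (erefl (K - l)%N) => m.
elim: m l hl p => [|m IH] l hl p hm Wp hX.
  have -> : l = K by apply/eqP; rewrite eqn_leq hl /= -subn_eq0 hm.
  by rewrite rho_from_K; apply: hX.
have lK : (l < K)%N by rewrite -subn_gt0 hm.
have hp : in_proj W l p by exists p.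
rewrite rho_from_S // /rho.
destruct (pselect (in_proj W l p)) as [h|hn]; last by case: (hn hp).
simpl.
apply: ge_ereal_sup; move=> _ [r' [Wr' ar'] <-].
apply: IH => //; first by rewrite subnS hm.
move=> s Ws as'; apply: hX => // i hi.
by rewrite as' ?(ltnW (leq_trans hi _)) ?ar' // (leq_trans hi).
Qed.

Lemma rho_from_lb W k zeta l s : adapted k zeta ->
  (forall s l, W s -> (l < K)%N -> W (trunc l s)) ->
  (k <= l)%N -> (l <= K)%N -> W s ->
  ((- \sum_(j < K | (k <= j)%N && (j < l)%N) zeta j s * s 0 j)%:E
     <= rho_from W l (loss k zeta) s)%E.
Proof.
move=> hz hT; move: {2}(K - l)%N (erefl (K - l)%N) => m.
elim: m l s => [|m IH] l s hm hkl hl Ws.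
  have lK : l = K by apply/eqP; rewrite eqn_leq hl /= -subn_eq0 hm.
  subst l; rewrite rho_from_K /loss.
  by rewrite (eq_bigl (fun j : 'I_K => (k <= j)%N)) // => j; rewrite ltn_ord andbT.
have lK : (l < K)%N by rewrite -subn_gt0 hm.
have hp : in_proj W l s by exists s.
rewrite rho_from_S // /rho.
destruct (pselect (in_proj W l s)) as [h|hn]; last by case: (hn hp).
simpl.
have Wt := hT s l Ws lK.
set t := trunc l s.
apply: (@le_trans _ _ (rho_from W l.+1 (loss k zeta) t)); last first.
  by apply: ereal_sup_ubound; exists t => //; split => //; exact: agree_trunc.
have -> : \sum_(j < K | (k <= j)%N && (j < l)%N) zeta j s * s 0 j =
          \sum_(j < K | (k <= j)%N && (j < l.+1)%N) zeta j t * t 0 j.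
  rewrite big_mkcond [RHS]big_mkcond; apply: eq_bigr => j _.
  rewrite /t mxE; case: (ltngtP j l) => hjl.
  - rewrite ltnS (ltnW hjl); case: (leqP k j) => hkj //=.
    congr (_ * _); apply: hz => // i hi; rewrite mxE (ltn_trans hi hjl) //.
  - by rewrite andbF mulr0 if_same.
  - by rewrite andbF mulr0 if_same.
apply: IH => //; first by rewrite subnS hm.
exact: leqW.
Qed.

Definition zsingle (l : nat) (c : R) : nat -> 'rV[R]_K -> R :=
  fun j _ => if j == l then c else 0.

Lemma loss_single l (hl : (l < K)%N) c s :
  loss l (zsingle l c) s = (- (c * s 0 (Ordinal hl)))%:E.
Proof.
rewrite /loss /zsingle (bigD1 (Ordinal hl)) //= eqxx big1 ?addr0 // => j /andP[_ hj].
have -> : (j == l :> nat) = false.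
  by apply/negbTE; apply: contra hj => /eqP hjl; apply/eqP/val_inj.
by rewrite mul0r.
Qed.

Lemma no_arb_step W l p (hl : (l < K)%N) : W `<=` A_set W -> W p ->
  exists M : R, forall c, exists s, [/\ W s, agree l s p & c * s 0 (Ordinal hl) <= M].
Proof.
move=> hA Wp; have := hA p Wp l hl; cbv zeta.
set v := ereal_inf _ => -[hlo hup].
have [x vx] : exists x, v = x%:E by move: hlo hup; case: v => [x||] //; exists x.
exists (1 - x) => c.
case: (pselect (exists s, [/\ W s, agree l s p & c * s 0 (Ordinal hl) <= 1 - x])) => // hno.
exfalso.
have hb : forall s, W s -> agree l s p -> 1 - x < c * s 0 (Ordinal hl).
  move=> s Ws as'; rewrite ltNge; apply/negP => hle; apply: hno; by exists s.
have : (v <= rho_from W l (loss l (zsingle l c)) p)%E.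
  apply: ereal_inf_lbound; exists (zsingle l c) => //.
have : (rho_from W l (loss l (zsingle l c)) p <= (x - 1)%:E)%E.
  apply: rho_from_ub => //; first exact: ltnW.
  move=> s Ws as'; rewrite loss_single lee_fin; have := hb s Ws as'; lra.
move=> h1 h2; have := le_trans h2 h1; rewrite vx lee_fin; lra.
Qed.

Lemma na_trunc U W : convexU U -> closed U -> W `<=` U -> W `<=` A_set W ->
  forall l, (l <= K)%N -> forall p, W p -> U (trunc l p).
Proof.
move=> hconv hcl hWU hWA l hl p Wp.
move: {2}(K - l)%N (erefl (K - l)%N) => m.
elim: m l hl p Wp => [|m IH] l hl p Wp hm.
  have lK : l = K by apply/eqP; rewrite eqn_leq hl /= -subn_eq0 hm.
  by subst l; rewrite trunc_K; apply: hWU.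
have lK : (l < K)%N by rewrite -subn_gt0 hm.
set lo := Ordinal lK.
set x := trunc l p.
set d := (delta_mx 0 lo : 'rV[R]_K).
have key : forall a, W a -> agree l a p -> U (x + a 0 lo *: d).
  move=> a Wa aa.
  have -> : x + a 0 lo *: d = trunc l.+1 a.
    apply/rowP => i; rewrite !mxE eqxx /=.
    case: (ltngtP i l) => hil.
    - rewrite ltnS (ltnW hil) (aa i) //.
      have -> : (i == lo) = false by apply/negbTE; apply/eqP => /(congr1 val) /= hh; rewrite hh ltnn in hil.
      by rewrite mulr0 addr0.
    - rewrite ltnS leqNgt hil /=.
      have -> : (i == lo) = false by apply/negbTE; apply/eqP => /(congr1 val) /= hh; rewrite hh ltnn in hil.
      by rewrite mulr0 addr0.
    - have hi : i = lo by apply/val_inj.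
      by rewrite hi eqxx mulr1 add0r /= ltnSn.
  apply: IH => //; first by rewrite subnS hm.
have [M hM] := no_arb_step W l p lK hWA Wp.
apply: hcl => B /nbhs_ballP [e /= e0 hB].
set δ := `|d|.
have δ0 : 0 <= δ by rewrite /δ normr_ge0.
set ε := e / (δ + 1).
have ε0 : 0 < ε by rewrite /ε divr_gt0 // ltr_wpDl.
have εe : ε * (δ + 1) = e by rewrite /ε divfK // gt_eqF // ltr_wpDl.
set D := (`|M| + 1) / ε.
have D0 : 0 < D by rewrite /D divr_gt0 // ltr_wpDl.
have De : D * ε = `|M| + 1 by rewrite /D divfK // gt_eqF.
have hMM : M <= `|M| := ler_norm M.
have [a [Wa aa ha]] := hM D.
have [b [Wb ab hb]] := hM (- D).
have al : a 0 lo < ε.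
  have : D * a 0 lo < D * ε by rewrite De; lra.
  by rewrite ltr_pM2l.
have bl : - ε < b 0 lo.
  have : D * (- b 0 lo) < D * ε by rewrite De; lra.
  by rewrite ltr_pM2l // ltrNl.
have [t [ht Ut]] : exists t, `|t| < ε /\ U (x + t *: d).
  case: (ltrP (- ε) (a 0 lo)) => ha'.
    by exists (a 0 lo); split; [rewrite ltr_norml ha' al | exact: key].
  case: (ltrP (b 0 lo) ε) => hb'.
    by exists (b 0 lo); split; [rewrite ltr_norml bl hb' | exact: key].
  exists 0; split; first by rewrite normr0.
  have kA := key a Wa aa; have kB := key b Wb ab.
  move: kA kB ha' hb'; generalize (a 0 lo) (b 0 lo) => A Bb kA kB ha' hb'.
  have hBA : Bb - A != 0 by apply: lt0r_neq0; lra.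
  set λ := Bb / (Bb - A).
  have λ0 : 0 <= λ by rewrite /λ divr_ge0 //; lra.
  have λ1 : λ <= 1 by rewrite /λ ler_pdivrMr; lra.
  have -> : x + 0 *: d = λ *: (x + A *: d) + (1 - λ) *: (x + Bb *: d).
    rewrite !scalerDr !scalerA addrACA -!scalerDl.
    have -> : λ + (1 - λ) = 1 by ring.
    have -> : λ * A + (1 - λ) * Bb = 0 by rewrite /λ; field.
    by rewrite scale1r.
  by apply: hconv.
exists (x + t *: d); split => //; apply: hB.
rewrite -ball_normE /ball_ /= opprD addrA subrr add0r normrN normrZ -/δ.
nra.
Qed.
End Helpers.

Lemma truncU (R : realType) (K : nat) (U : set 'rV[R]_K) s l :
  (V_set U `&` U) s -> (l < K)%N -> U (trunc l s).
Proof.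
move=> [[U0 hV] Us] lK.
case: l lK => [|l] lK; first by rewrite trunc0.
case: (hV l.+1) => //; first by lia.
  by rewrite sum_trunc.
by case; exists s.
Qed.

Theorem theorem1 (R : realType) (K : nat) (U : set 'rV[R]_K) :
  convexU U -> closed U -> is_na_subset U (V_set U `&` U).
Proof.
move=> hconv hcl.
set W := V_set U `&` U.
have hT : forall s l, W s -> (l < K)%N -> W (trunc l s).
  move=> s l Ws lK; have [[U0 _] _] := Ws; split; last exact: truncU.
  split => // k k1 kK; left; rewrite sum_trunc trunc_trunc.
  apply: truncU Ws _; rewrite (leq_ltn_trans (geq_minr k l)) //.
split.
- by move=> r [].
- move=> r Wr k hk; cbv zeta; split.
  + apply: (@lt_le_trans _ _ 0%E) => //.
    apply: le_ereal_inf_tmp => _ [z hz <-].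
    have := @rho_from_lb R K W k z k r hz hT (leqnn k) (ltnW hk) Wr.
    rewrite big1 ?oppr0 //.
    by move=> j /andP[h1 h2]; move: h2; rewrite ltnNge h1.
  + apply: (@le_trans _ _ (rho_from W k (loss k (fun _ _ => 0)) r)).
      by apply: ereal_inf_lbound; exists (fun _ _ => 0).
    apply: rho_from_ub => //; first exact: ltnW.
    by move=> s _ _; rewrite /loss big1 ?oppr0 // => j _; rewrite mul0r.
- move=> W' hW'U hW'A r Wr; split; last exact: hW'U.
  split.
    by rewrite -(@trunc0 R K r); apply: (@na_trunc R K U W' hconv hcl hW'U hW'A) => //.
  move=> k k1 kK; left; rewrite sum_trunc.
  by apply: (@na_trunc R K U W' hconv hcl hW'U hW'A) => //; lia.
Qed.
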